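(* For every natural number $\bar{q} > 1$ there exist two non-isomorphic bipartite graphs $G_\mathrm{b} = (L,R,E_\mathrm{b})$ and $G_\mathrm{e} = (L,R,E_\mathrm{e})$ on the same node sets, with the same left degree sequence, the same right degree sequence, and the same number of butterflies, $\beta(G_\mathrm{b}) = \beta(G_\mathrm{e})$, such that the following holds. Let $\langle \rho_1,\dots,\rho_z\rangle$ be any sequence of operations, where each $\rho_i$ is a $p_i$-BSO with $p_i \in \mathbb{N}^+$, such that applying $\rho_1,\dots,\rho_z$ successively to $G_\mathrm{b}$ yields $G_\mathrm{e}$, and such that every intermediate graph $G^i$ (obtained from $G_\mathrm{b}$ by applying $\rho_1,\dots,\rho_i$) has the same left and right degree sequences as $G_\mathrm{b}$ and $\beta(G^i) = \beta(G_\mathrm{b})$. Then there exists $\ell \in \{1,\dots,z\}$ with $p_\ell \ge \bar{q}$.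
   Context: A bipartite graph is a triple $G=(L,R,E)$ with $L,R$ disjoint finite node sets and $E \subseteq L\times R$; edges are undirected and written $(u,a)$ with $u\in L$, $a \in R$. $N_G(v)$ denotes the set of neighbors of $v$ and $\deg_G(v)=|N_G(v)|$. With fixed labelings $u_1,\dots,u_{|L|}$ of $L$ and $a_1,\dots,a_{|R|}$ of $R$, the left (right) degree sequence is $(\deg_G(u_1),\dots,\deg_G(u_{|L|}))$ (resp. $(\deg_G(a_1),\dots,\deg_G(a_{|R|}))$). A butterfly in $G$ is a set $\{u,v,a,b\}$ with $u\neq v \in L$, $a \neq b \in R$ and $\{(u,a),(u,b),(v,a),(v,b)\}\subseteq E$; $\beta(G)$ denotes the number of butterflies in $G$. For $q\in\mathbb{N}^+$, a $q$-edge bipartite swap operation ($q$-BSO) on $G$ is a pair $(S,\sigma)$ where $S=(e_1,\dots,e_q)$ is a vector of $q$ distinct edges $e_i=(u_i,a_i)\in E$ and $\sigma$ is a derangement of $\{1,\dots,q\}$ (a permutation with no fixed point) such that $(u_j,a_{\sigma(j)})\notin E$ for every $j$; applying it produces the graph $(L,R,(E\setminus S)\cup\{(u_j,a_{\sigma(j)}): 1\le j\le q\})$, which has the same left and right degree sequences as $G$. *)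

(* Defs.v *)
From mathcomp Require Import all_boot all_order all_fingroup.
Set Implicit Arguments. Unset Strict Implicit. Unset Printing Implicit Defensive.

(* A bipartite graph with L = 'I_m, R = 'I_n is given by its edge set
   E : {set 'I_m * 'I_n}; (u, a) \in E means u in L is adjacent to a in R. *)
Notation bgraph m n := {set 'I_m * 'I_n}.

Definition ldeg m n (E : bgraph m n) (u : 'I_m) : nat := #|[set a | (u, a) \in E]|.
Definition rdeg m n (E : bgraph m n) (a : 'I_n) : nat := #|[set u | (u, a) \in E]|.

(* same left and same right degree sequences (w.r.t. the fixed labelings) *)
Definition same_degseqs m n (E1 E2 : bgraph m n) : Prop :=
  (forall u, ldeg E1 u = ldeg E2 u) /\ (forall a, rdeg E1 a = rdeg E2 a).

(* number of butterflies: sets {u,v,a,b}, u<>v in L, a<>b in R, all four edges present;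
   encoded as pairs ({u,v},{a,b}) of 2-subsets *)
Definition butterflies m n (E : bgraph m n) : nat :=
  #|[set X : {set 'I_m} * {set 'I_n} |
       [&& #|X.1| == 2, #|X.2| == 2 & setX X.1 X.2 \subset E]]|.

Definition bisomorphic m n (E1 E2 : bgraph m n) : Prop :=
  exists (f : {perm 'I_m}) (g : {perm 'I_n}),
    forall u a, ((u, a) \in E1) = ((f u, g a) \in E2).

Definition is_bso m n (E : bgraph m n) q (S : 'I_q -> 'I_m * 'I_n) (sigma : {perm 'I_q}) : Prop :=
  injective S /\ (forall j, S j \in E) /\ (forall j, sigma j != j) /\
  (forall j, ((S j).1, (S (sigma j)).2) \notin E).

Definition apply_bso m n (E : bgraph m n) q (S : 'I_q -> 'I_m * 'I_n) (sigma : {perm 'I_q})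
  : bgraph m n :=
  (E :\: [set S j | j : 'I_q]) :|: [set ((S j).1, (S (sigma j)).2) | j : 'I_q].

Definition bso_step m n (E : bgraph m n) q (E' : bgraph m n) : Prop :=
  exists (S : 'I_q -> 'I_m * 'I_n) (sigma : {perm 'I_q}),
    is_bso E S sigma /\ apply_bso E S sigma = E'.

(* Main.v *)
Require Import Defs.
From mathcomp Require Import all_boot all_order all_fingroup.
From mathcomp Require Import zify.

Set Implicit Arguments. Unset Strict Implicit. Unset Printing Implicit Defensive.

Definition nbE m n (E : bgraph m n) (u : 'I_m) : {set 'I_n} := [set a | (u, a) \in E].

Definition Dset m (P : nat) : {set 'I_m} := [set u : 'I_m | u < P].

Definition twos m (P : nat) : {set {set 'I_m}} :=
  [set A : {set 'I_m} | (A \subset Dset m P) && (#|A| == 2)].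

Definition goods m n P (G : bgraph m n) : {set {set 'I_m}} :=
  [set A : {set 'I_m} | [&& A \subset Dset m P, #|A| == 2 &
      [forall u in A, forall v in A, nbE G u == nbE G v]]].

Lemma goods_sub m n P (G : bgraph m n) : goods P G \subset twos m P.
Proof. by apply/subsetP => A; rewrite !inE => /and3P[-> -> _]. Qed.

Lemma bfly_le m n P (G : bgraph m n) :
  (forall u : 'I_m, u < P -> ldeg G u = 2) ->
  (forall u : 'I_m, P <= u -> ldeg G u <= 1) ->
  butterflies G <= #|goods P G|.
Proof.
move=> H2 H1.
pose B := [set X : {set 'I_m} * {set 'I_n} |
       [&& #|X.1| == 2, #|X.2| == 2 & setX X.1 X.2 \subset G]].
have key : forall X, X \in B -> forall u, u \in X.1 -> u < P /\ nbE G u = X.2.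
  move=> X; rewrite inE => /and3P[c1 c2 sub] u uX.
  have s2 : X.2 \subset nbE G u.
    apply/subsetP => a aX; rewrite inE; apply: (subsetP sub); by rewrite inE uX aX.
  have le2 := subset_leq_card s2.
  have uP : u < P.
    case: (ltnP u P) => // Pu; have h : #|nbE G u| <= 1 := H1 u Pu.
    by rewrite (eqP c2) in le2; lia.
  split => //; apply/esym/eqP; rewrite eqEcard s2 /= (eqP c2).
  by have h : #|nbE G u| = 2 := H2 u uP; rewrite h.
have inj : {in B &, injective (fun X : {set 'I_m} * {set 'I_n} => X.1)}.
  move=> X Y XB YB /= e.
  have XB' := XB; rewrite inE in XB'; case/and3P: XB' => c1 _ _.
  have : 0 < #|X.1| by rewrite (eqP c1).
  case/card_gt0P => u uX.
  have [_ e1] := key X XB u uX.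
  have uY : u \in Y.1 by rewrite -e.
  have [_ e2] := key Y YB u uY.
  by clear -e e1 e2; case: X Y e e1 e2 => [x1 x2] [y1 y2] /= -> <- <-.
rewrite /butterflies -/B -(card_in_imset inj).
apply: subset_leq_card; apply/subsetP => A /imsetP[X XB ->].
have XB' := XB; rewrite inE in XB'; case/and3P: XB' => c1 c2 _.
rewrite inE c1 /=; apply/andP; split.
  by apply/subsetP => u uX; rewrite inE; case: (key X XB u uX).
apply/forallP => u; apply/implyP => uX; apply/forallP => v; apply/implyP => vX.
by have [_ ->] := key X XB u uX; have [_ ->] := key X XB v vX.
Qed.

Lemma bfly_ge m n P (G : bgraph m n) (T : {set 'I_n}) :
  (forall u : 'I_m, u < P -> nbE G u = T) -> #|T| = 2 ->
  #|twos m P| <= butterflies G.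
Proof.
move=> HT cT.
have inj : injective (fun A : {set 'I_m} => (A, T)) by move=> A B [].
rewrite -(card_imset (twos m P) inj); apply: subset_leq_card.
apply/subsetP => X /imsetP[A]; rewrite inE => /andP[sA cA] ->.
rewrite inE /= cA cT eqxx /=; apply/subsetP => [[u a]]; rewrite inE /= => /andP[uA aT].
have uP : u < P by have := subsetP sA u uA; rewrite inE.
by rewrite -(HT u uP) inE in aT.
Qed.

Lemma bfly_uniform m n P (G : bgraph m n) (T : {set 'I_n}) :
  (forall u : 'I_m, u < P -> nbE G u = T) -> #|T| = 2 ->
  (forall u : 'I_m, P <= u -> ldeg G u <= 1) ->
  butterflies G = #|twos m P|.
Proof.
move=> HT cT H1; apply/eqP; rewrite eqn_leq (bfly_ge HT cT) andbT.
apply: leq_trans (bfly_le _ H1) (subset_leq_card (goods_sub P G)).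
by move=> u uP; change (#|nbE G u| = 2); rewrite HT.
Qed.

Lemma bfly_nonuniform m n P (G : bgraph m n) (u v : 'I_m) :
  (forall u : 'I_m, u < P -> ldeg G u = 2) ->
  (forall u : 'I_m, P <= u -> ldeg G u <= 1) ->
  u < P -> v < P -> nbE G u != nbE G v ->
  butterflies G < #|twos m P|.
Proof.
move=> H2 H1 uP vP ne.
apply: leq_ltn_trans (bfly_le H2 H1) _; apply: proper_card.
apply/properP; split; first exact: goods_sub.
have uv : u != v by apply: contraNneq ne => ->.
exists [set u; v].
  rewrite inE cards2 uv eqxx andbT; apply/subsetP => w; rewrite !inE.
  by case/orP => /eqP ->.
rewrite inE negb_and; apply/orP; right; rewrite negb_and; apply/orP; right.
apply/negP => /forallP /(_ u) /implyP; rewrite !inE eqxx => /(_ isT).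
by move/forallP/(_ v)/implyP; rewrite !inE eqxx orbT => /(_ isT); apply/negP.
Qed.

Lemma card_lt m k : k <= m -> #|[set u : 'I_m | u < k]| = k.
Proof.
move=> km.

have inj : injective (widen_ord km) by move=> x y /(congr1 val) => /= /val_inj.
rewrite -[RHS](card_ord k) -cardsT -(card_imset [set: _] inj).
apply: eq_card => u; rewrite inE; apply/idP/imsetP.
  move=> uk; exists (Ordinal uk) => //; exact: val_inj.
by case=> x _ ->; rewrite /= ltn_ord.
Qed.

Definition a0 : 'I_3 := ord0.
Definition a2 : 'I_3 := ord_max.
Definition mkG m (nb : 'I_m -> {set 'I_3}) : bgraph m 3 := [set e | e.2 \in nb e.1].
Definition nbB P (u : 'I_(P+P).+1) : {set 'I_3} := if u < P then [set~ a2] else [set a2].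
Definition nbEe P (u : 'I_(P+P).+1) : {set 'I_3} :=
  if u < P then [set~ a0] else if u == ord_max then [set a2] else [set a0].

Lemma nbE_mkG m nb (u : 'I_m) : nbE (mkG nb) u = nb u.
Proof. by apply/setP => a; rewrite !inE. Qed.

Lemma ldeg_mkG m nb (u : 'I_m) : ldeg (mkG nb) u = #|nb u|.
Proof. by rewrite -(nbE_mkG nb u). Qed.

Lemma rdeg_mkG m nb (a : 'I_3) : rdeg (mkG nb) a = #|[set u : 'I_m | a \in nb u]|.
Proof. by apply: eq_card => u; rewrite !inE. Qed.

Lemma a02 : a0 != a2. Proof. by []. Qed.

Lemma ldegB P u : ldeg (mkG (@nbB P)) u = if u < P then 2 else 1.
Proof. by rewrite ldeg_mkG /nbB; case: (u < P); rewrite ?cardsC1 ?card_ord ?cards1. Qed.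

Lemma ldegE P u : ldeg (mkG (@nbEe P)) u = if u < P then 2 else 1.
Proof.
by rewrite ldeg_mkG /nbEe; case: (u < P); rewrite ?cardsC1 ?card_ord //; case: ifP; rewrite cards1.
Qed.

Lemma CmaxN P : (ord_max : 'I_(P+P).+1) \notin [set u : 'I_(P+P).+1 | u < P].
Proof. rewrite inE /=; lia. Qed.

Lemma rdegB P a : rdeg (mkG (@nbB P)) a = if a == a2 then P.+1 else P.
Proof.
rewrite rdeg_mkG; set C := [set u : 'I_(P+P).+1 | u < P].
have cC : #|C| = P by rewrite card_lt //; lia.
case: eqP => [->|/eqP ne].
  have -> : [set u | a2 \in nbB u] = ~: C.
    by apply/setP => u; rewrite !inE /nbB; case: (u < P); rewrite !inE ?eqxx.
  have := cardsC C; rewrite card_ord cC; lia.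
have -> : [set u | a \in nbB u] = C.
  by apply/setP => u; rewrite !inE /nbB; case: (u < P); rewrite !inE ?ne //; apply/negbTE.
by [].
Qed.

Lemma rdegE P a : rdeg (mkG (@nbEe P)) a = if a == a2 then P.+1 else P.
Proof.
rewrite rdeg_mkG; set C := [set u : 'I_(P+P).+1 | u < P].
have cC : #|C| = P by rewrite card_lt //; lia.
case: eqP => [->|/eqP ne].
  have -> : [set u | a2 \in nbEe u] = ord_max |: C.
    apply/setP => u; rewrite !inE /nbEe; case: (u < P); rewrite ?orbT ?orbF.
      by rewrite !inE.
    by case: ifP => h; rewrite !inE ?eqxx.
  by rewrite cardsU1 (CmaxN P) cC.
case: (eqVneq a a0) => [->|ne0].
  have -> : [set u | a0 \in nbEe u] = ~: (ord_max |: C).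
    apply/setP => u; rewrite !inE /nbEe; case: (u < P); rewrite ?orbT ?orbF /=.
      by rewrite !inE.
    by case: ifP => h; rewrite !inE ?eqxx.
  have := cardsC (ord_max |: C); rewrite card_ord cardsU1 (CmaxN P) cC; lia.
have -> : [set u | a \in nbEe u] = C.
  apply/setP => u; rewrite !inE /nbEe; case: (u < P).
    by rewrite !inE.
  by case: ifP => _; rewrite !inE; apply/negbTE.
by [].
Qed.

Lemma iso_ldeg m n (E1 E2 : bgraph m n) (f : {perm 'I_m}) (g : {perm 'I_n}) :
  (forall u a, ((u, a) \in E1) = ((f u, g a) \in E2)) ->
  forall u, ldeg E1 u = ldeg E2 (f u).
Proof.
move=> H u; rewrite /ldeg.
have -> : [set a | (u, a) \in E1] = g @^-1: [set b | (f u, b) \in E2].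
  by apply/setP => a; rewrite !inE H.
by rewrite card_preimset //; apply: perm_inj.
Qed.

Lemma iso_rdeg m n (E1 E2 : bgraph m n) (f : {perm 'I_m}) (g : {perm 'I_n}) :
  (forall u a, ((u, a) \in E1) = ((f u, g a) \in E2)) ->
  forall a, rdeg E1 a = rdeg E2 (g a).
Proof.
move=> H a; rewrite /rdeg.
have -> : [set u | (u, a) \in E1] = f @^-1: [set v | (v, g a) \in E2].
  by apply/setP => u; rewrite !inE H.
by rewrite card_preimset //; apply: perm_inj.
Qed.

Lemma noniso P : 1 < P -> ~ bisomorphic (mkG (@nbB P)) (mkG (@nbEe P)).
Proof.
move=> hP [f [g H]].
have ga2 : g a2 = a2.
  have := iso_rdeg H a2; rewrite rdegB rdegE eqxx.
  by case: eqP => // _; lia.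
pose w := (f^-1)%g ord0.
have fw : f w = ord0 by rewrite /w permKV.
have := H w a2; rewrite fw ga2 !inE /nbEe /nbB /=.
have -> : (0 < P) by lia.
rewrite !inE /=.
case: ifP; rewrite ?inE ?eqxx // => wP _.
have := iso_ldeg H w; rewrite fw ldegB ldegE wP /=.
by have -> : (0 < P) by lia.
Qed.

Lemma bflyB P : butterflies (mkG (@nbB P)) = #|twos (P+P).+1 P|.
Proof.
apply: (bfly_uniform (T := [set~ a2])).
- by move=> u uP; rewrite nbE_mkG /nbB uP.
- by rewrite cardsC1 card_ord.
- by move=> u Pu; rewrite ldegB; case: ifP => //; lia.
Qed.

Lemma bflyE P : butterflies (mkG (@nbEe P)) = #|twos (P+P).+1 P|.
Proof.
apply: (bfly_uniform (T := [set~ a0])).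
- by move=> u uP; rewrite nbE_mkG /nbEe uP.
- by rewrite cardsC1 card_ord.
- by move=> u Pu; rewrite ldegE; case: ifP => //; lia.
Qed.

Theorem theorem1 :
  forall qbar : nat, 1 < qbar ->
  exists (m n : nat) (Eb Ee : bgraph m n),
    ~ bisomorphic Eb Ee /\ same_degseqs Eb Ee /\ butterflies Eb = butterflies Ee /\
    forall (z : nat) (G : nat -> bgraph m n) (p : nat -> nat),
      G 0 = Eb -> G z = Ee ->
      (forall i, i < z -> 0 < p i /\ bso_step (G i) (p i) (G i.+1)) ->
      (forall i, i <= z -> same_degseqs (G i) Eb /\ butterflies (G i) = butterflies Eb) ->
      exists l, l < z /\ qbar <= p l.
Proof.
move=> P hP.
exists (P+P).+1, 3, (mkG (@nbB P)), (mkG (@nbEe P)).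
split; first exact: noniso.
split.
  by split => [u|a]; rewrite ?ldegB ?ldegE ?rdegB ?rdegE.
split; first by rewrite bflyB bflyE.
move=> z G p G0 Gz Hstep Hinv.
have P0 : 0 < P by lia.
pose o0 : 'I_(P+P).+1 := ord0.
have o0P : o0 < P := P0.
have deg i : i <= z -> forall u, ldeg (G i) u = if u < P then 2 else 1.
  by move=> iz u; rewrite (Hinv i iz).1.1 ldegB.
have unif i : i <= z -> forall u : 'I_(P+P).+1, u < P -> nbE (G i) u = nbE (G i) o0.
  move=> iz u uP; case: (eqVneq (nbE (G i) u) (nbE (G i) o0)) => // ne.
  have H2 : forall v : 'I_(P+P).+1, v < P -> ldeg (G i) v = 2.
    by move=> v vP; rewrite deg // vP.
  have H1 : forall v : 'I_(P+P).+1, P <= v -> ldeg (G i) v <= 1.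
    by move=> v vP; rewrite deg //; case: ifP => //; lia.
  have := bfly_nonuniform H2 H1 uP o0P ne.
  by rewrite (Hinv i iz).2 bflyB ltnn.
pose T i := nbE (G i) o0.
have cT i : i <= z -> #|T i| = 2.
  by move=> iz; have := deg i iz o0; rewrite P0.
have T0 : T 0 = [set~ a2] by rewrite /T G0 nbE_mkG /nbB P0.
have Tz : T z = [set~ a0] by rewrite /T Gz nbE_mkG /nbEe P0.
have [i Hi] : exists i : 'I_z, T i != T i.+1.
  case: (boolP [exists i : 'I_z, T i != T i.+1]) => [/existsP//|/existsPn Hno].
  have Hk : forall k, k <= z -> T k = T 0.
    elim=> [//|k IH] kz.
    have kz' : k < z by [].
    have := Hno (Ordinal kz'); rewrite negbK /= => /eqP <-.
    by apply: IH; apply: ltnW.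
  have := Hk z (leqnn z); rewrite Tz T0 => /setP /(_ a0).
  by rewrite !inE.
have iz : i < z := ltn_ord i.
have [_ [S [sigma [_ Happ]]]] := Hstep i iz.
have [a aTi aTi1] : exists2 a, a \in T i & a \notin T i.+1.
  apply/subsetPn; apply: contra Hi => sub.
  by rewrite eqEcard sub (cT i (ltnW iz)) (cT i.+1 iz).
have sub : [set (u, a) | u in Dset (P+P).+1 P] \subset [set S j | j : 'I_(p i)].
  apply/subsetP => e /imsetP[u]; rewrite inE => uP ->.
  have in1 : (u, a) \in G i.
    by have := aTi; rewrite /T -(unif i (ltnW iz) u uP) inE.
  have out1 : (u, a) \notin G i.+1.
    by have := aTi1; rewrite /T -(unif i.+1 iz u uP) inE.
  move: out1; rewrite -Happ /apply_bso !inE in1 andbT negb_or => /andP[].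
  by rewrite negbK.
exists i; split => //.
have := subset_leq_card sub.
rewrite card_imset; last by move=> x y [].
rewrite card_lt; last by lia.
move=> h; apply: leq_trans h _.
apply: leq_trans (leq_imset_card _ _) _.
by rewrite card_ord.
Qed.
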